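(* Let $\mathcal G$ be an étale groupoid, $A$ a right $\mathcal G$-space and $B$ a left $\mathcal G$-space. If the $\mathcal G$-action on $A$ is proper and $B$ is Hausdorff, then the diagonal $\mathcal G$-action on $A\times_{s,\mathcal G^0,r}B$ defined by $g\cdot(a,b)=(a\cdot g^{-1},g\cdot b)$ (for $s(g)=s(a)=r(b)$) is proper.
   Context: An étale groupoid: topologies on arrow space $\mathcal G$ and object space $\mathcal G^0$ with $r,s$ local homeomorphisms and continuous multiplication and inversion. A right $\mathcal G$-space: space with continuous anchor $s$ and continuous action $(x,g)\mapsto xg$ defined when $s(x)=r(g)$, with $s(xg)=s(g)$, $(xg_1)g_2=x(g_1g_2)$, $x\,s(x)=x$; left spaces analogously with anchor $r$. A continuous map $f$ is proper if $f\times\mathrm{id}_Z$ is closed for every topological space $Z$. A right action on $A$ is proper if $A\times_{s,\mathcal G^0,r}\mathcal G\to A\times A$, $(a,g)\mapsto(ag,a)$, is proper; the diagonal (left) action on $W=A\times_{s,\mathcal G^0,r}B$, with anchor $(a,b)\mapsto s(a)=r(b)$, is proper if $\{(g,w)\in\mathcal G\times W: s(g)=\text{anchor}(w)\}\to W\times W$, $(g,w)\mapsto(g\cdot w,w)$, is proper. *)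

(* Defs.v *)
From HB Require Import structures.
From mathcomp Require Import all_boot all_order.
From mathcomp Require Import all_classical all_reals.
From mathcomp Require Import topology.
Set Implicit Arguments. Unset Strict Implicit. Unset Printing Implicit Defensive.
Local Open Scope classical_set_scope.

Definition rel_closed {X : topologicalType} (D C : set X) : Prop :=
  exists K : set X, closed K /\ C = D `&` K.

Definition proper_on {X Y : topologicalType} (D : set X) (E : set Y)
    (f : X -> Y) : Prop :=
  {within D, continuous f} /\ f @` D `<=` E /\
  forall (Z : topologicalType) (C : set (X * Z)),
    rel_closed (D `*` setT) C ->
    rel_closed (E `*` setT) ((fun p : X * Z => (f p.1, p.2)) @` C).

Definition local_homeo {X Y : topologicalType} (f : X -> Y) : Prop :=
  forall x : X, exists U : set X,
    [/\ open U /\ U x, open (f @` U), {in U &, injective f},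
        {within U, continuous f} &
        forall V : set X, open V -> V `<=` U -> open (f @` V)].

(* Étale groupoid with arrow space G, object space G0, range r, source s,
   multiplication mul (meaningful when s g = r h), inverse inv and units u. *)
Definition etale_groupoid {G G0 : topologicalType} (r s : G -> G0)
    (mul : G -> G -> G) (inv : G -> G) (u : G0 -> G) : Prop :=
  [/\ (forall x, r (u x) = x /\ s (u x) = x) /\
      (forall g h, s g = r h -> r (mul g h) = r g /\ s (mul g h) = s h) /\
      (forall g h k, s g = r h -> s h = r k -> mul (mul g h) k = mul g (mul h k)),
      (forall g, mul (u (r g)) g = g /\ mul g (u (s g)) = g) /\
      (forall g, [/\ r (inv g) = s g, s (inv g) = r g,
                    mul g (inv g) = u (r g) & mul (inv g) g = u (s g)]),
      local_homeo r /\ local_homeo s,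
      {within [set p : G * G | s p.1 = r p.2], continuous (fun p => mul p.1 p.2)}
    & continuous inv /\ continuous u].

Definition right_space {G G0 A : topologicalType} (r s : G -> G0)
    (mul : G -> G -> G) (u : G0 -> G) (sA : A -> G0) (act : A -> G -> A) : Prop :=
  [/\ continuous sA,
      {within [set p : A * G | sA p.1 = r p.2], continuous (fun p => act p.1 p.2)},
      (forall x g, sA x = r g -> sA (act x g) = s g),
      (forall x g1 g2, sA x = r g1 -> s g1 = r g2 ->
         act (act x g1) g2 = act x (mul g1 g2))
    & (forall x, act x (u (sA x)) = x)].

Definition left_space {G G0 B : topologicalType} (r s : G -> G0)
    (mul : G -> G -> G) (u : G0 -> G) (rB : B -> G0) (act : G -> B -> B) : Prop :=
  [/\ continuous rB,
      {within [set p : G * B | s p.1 = rB p.2], continuous (fun p => act p.1 p.2)},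
      (forall g y, s g = rB y -> rB (act g y) = r g),
      (forall g1 g2 y, s g2 = rB y -> s g1 = r g2 ->
         act g1 (act g2 y) = act (mul g1 g2) y)
    & (forall y, act (u (rB y)) y = y)].

Definition proper_right_action {G G0 A : topologicalType} (r : G -> G0)
    (sA : A -> G0) (act : A -> G -> A) : Prop :=
  proper_on [set p : A * G | sA p.1 = r p.2] setT
    (fun p : A * G => (act p.1 p.2, p.1)).

Definition fibre_prod {G0 A B : topologicalType} (sA : A -> G0) (rB : B -> G0)
  : set (A * B) := [set w | sA w.1 = rB w.2].

Definition diag_act {G A B : topologicalType} (inv : G -> G)
    (actA : A -> G -> A) (actB : G -> B -> B) (g : G) (w : A * B) : A * B :=
  (actA w.1 (inv g), actB g w.2).

Definition proper_diag_action {G G0 A B : topologicalType} (s : G -> G0)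
    (inv : G -> G) (sA : A -> G0) (rB : B -> G0)
    (actA : A -> G -> A) (actB : G -> B -> B) : Prop :=
  proper_on [set p : G * (A * B) | fibre_prod sA rB p.2 /\ s p.1 = sA p.2.1]
    (fibre_prod sA rB `*` fibre_prod sA rB)
    (fun p : G * (A * B) => (diag_act inv actA actB p.1 p.2, p.2)).

(* Main.v *)
Require Import Defs.
From mathcomp Require Import all_boot all_order all_classical all_reals topology.
Local Open Scope classical_set_scope.
Set Implicit Arguments. Unset Strict Implicit. Unset Printing Implicit Defensive.

Lemma cw_ev {X Y : topologicalType} (P : set X) (f : X -> Y) x V :
  f @ within P (nbhs x) --> f x -> nbhs (f x) V -> nbhs x [set y | P y -> V (f y)].
Proof. by move=> H /H. Qed.

Lemma cw_cont {X Y : topologicalType} (P : set X) (f : X -> Y) x :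
  continuous f -> f @ within P (nbhs x) --> f x.
Proof.
move=> cf; apply: cvg_trans (cf x); apply: cvg_fmap2; exact: cvg_within.
Qed.

Lemma cw_comp {X Y W : topologicalType} (P : set X) (Q : set Y) (f : X -> Y) (g : Y -> W) x :
  f @ within P (nbhs x) --> f x -> (forall y, P y -> Q (f y)) ->
  g @ within Q (nbhs (f x)) --> g (f x) ->
  (fun y => g (f y)) @ within P (nbhs x) --> g (f x).
Proof.
move=> cf PQ cg V /(cw_ev cg) N.
have := cw_ev cf N; rewrite /= /within; apply: filterS => y H Py.
exact: (H Py (PQ _ Py)).
Qed.

Lemma closure_K {X Y : topologicalType} (P : set X) (S : set X) (f : X -> Y) (K : set Y) x :
  closure S x -> S `<=` P -> f @ within P (nbhs x) --> f x -> closed K ->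
  (forall y, S y -> K (f y)) -> K (f x).
Proof.
move=> clS SP cf cK SK; apply: cK => B /(cw_ev cf) N.
have [y [Sy Ny]] := clS _ N; exists (f y); split; [exact: SK | exact: Ny (SP _ Sy)].
Qed.

Lemma hausd {X Y : topologicalType} (P : set X) (S : set X) (f1 f2 : X -> Y) x :
  hausdorff_space Y -> closure S x -> S `<=` P ->
  f1 @ within P (nbhs x) --> f1 x -> f2 @ within P (nbhs x) --> f2 x ->
  (forall y, S y -> f1 y = f2 y) -> f1 x = f2 x.
Proof.
move=> HY clS SP c1 c2 S12; apply: HY => U V nU nV.
have N := @filterI _ _ _ _ _ (cw_ev c1 nU) (cw_ev c2 nV).
have [y [Sy [N1 N2]]] := clS _ (N (nbhs_filter x)).
exists (f1 y); split; first exact: N1 (SP _ Sy).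
by rewrite S12 //; exact: N2 (SP _ Sy).
Qed.

Lemma cont_fst {X Y : topologicalType} : continuous (@fst X Y).
Proof. by move=> [a b]; exact: cvg_fst. Qed.
Lemma cont_snd {X Y : topologicalType} : continuous (@snd X Y).
Proof. by move=> [a b]; exact: cvg_snd. Qed.

Lemma cw_pair {X Y1 Y2 : topologicalType} (P : set X) (f1 : X -> Y1) (f2 : X -> Y2) x :
  f1 @ within P (nbhs x) --> f1 x -> f2 @ within P (nbhs x) --> f2 x ->
  (fun y => (f1 y, f2 y)) @ within P (nbhs x) --> (f1 x, f2 x).
Proof. by move=> c1 c2; apply: cvg_pair. Qed.

Lemma cont_comp {X Y W : topologicalType} (f : X -> Y) (g : Y -> W) :
  continuous f -> continuous g -> continuous (fun x => g (f x)).
Proof. by move=> cf cg x; apply: continuous_comp; [exact: cf | exact: cg]. Qed.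

Lemma cont_pair {X Y1 Y2 : topologicalType} (f1 : X -> Y1) (f2 : X -> Y2) :
  continuous f1 -> continuous f2 -> continuous (fun y => (f1 y, f2 y)).
Proof. by move=> c1 c2 x; apply: cvg_pair; [exact: c1 | exact: c2]. Qed.

Ltac cont_tac :=
  repeat first [ exact: cont_fst | exact: cont_snd | apply: cont_pair
               | apply: (cont_comp _ cont_fst) | apply: (cont_comp _ cont_snd) ].

Theorem lemma5p2 (G G0 A B : topologicalType)
    (r s : G -> G0) (mul : G -> G -> G) (inv : G -> G) (u : G0 -> G)
    (sA : A -> G0) (actA : A -> G -> A) (rB : B -> G0) (actB : G -> B -> B) :
  etale_groupoid r s mul inv u ->
  right_space r s mul u sA actA ->
  left_space r s mul u rB actB ->
  proper_right_action r sA actA ->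
  hausdorff_space B ->
  proper_diag_action s inv sA rB actA actB.
Proof.
move=> [[Hru [Hrs Hass]] [Hunit Hinv] [lr ls] cmul [cinv cu]]
  [csA cactA HsA HassA HuA] [crB cactB HrB HassB HuB] [_ [_ HP]] HB.
have cA := proj1 (subspace_continuousP _ _) cactA.
have cB := proj1 (subspace_continuousP _ _) cactB.
have alg1 a g : sA a = s g -> actA (actA a (inv g)) g = a.
  have [h1 h2 h3 h4] := Hinv g => e.
  rewrite HassA ?h1 ?h2 // h4 -e; exact: HuA.
have alg2 a h : sA a = r h -> actA (actA a h) (inv h) = a.
  have [h1 h2 h3 h4] := Hinv h => e.
  rewrite HassA ?h1 ?h2 // h3 -e; exact: HuA.
split.
  apply: (proj2 (subspace_continuousP _ _)) => -[g [a b]] [Wab /= Dg].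
  apply: cw_pair; last first.
    apply: cw_cont; exact: cont_snd.
  rewrite /diag_act /=.
  apply: cw_pair.
    apply: (cw_comp (Q := [set p : A * G | sA p.1 = r p.2])
       (f := fun p : G * (A * B) => (p.2.1, inv p.1))
       (g := fun p : A * G => actA p.1 p.2)).
    - apply: cw_pair.
        apply: cw_cont; exact: (cont_comp (f := snd) (g := fst) cont_snd cont_fst).
      apply: cw_cont; exact: (cont_comp (f := fst) (g := inv) cont_fst cinv).
    - by move=> [g' [a' b']] [_ /= <-]; have [-> _ _ _] := Hinv g'.
    - by apply: cA => /=; have [-> _ _ _] := Hinv g; rewrite Dg.
  apply: (cw_comp (Q := [set p : G * B | s p.1 = rB p.2])
     (f := fun p : G * (A * B) => (p.1, p.2.2))
     (g := fun p : G * B => actB p.1 p.2)).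
  - apply: cw_pair; apply: cw_cont; first exact: cont_fst.
    exact: (cont_comp (f := snd) (g := snd) cont_snd cont_snd).
  - by move=> [g' [a' b']] [/= W' ->].
  - by apply: cB => /=; rewrite Dg.
split.
  move=> _ [[g [a b]] [/= Wab Dg] <-]; split => /=.
    rewrite /fibre_prod /= HsA; last by have [-> _ _ _] := Hinv g; rewrite Dg.
    rewrite HrB; last by rewrite Dg.
    by have [_ -> _ _] := Hinv g.
  exact: Wab.
move=> Z C [K [cK hC]].
pose E := [set p : A * G | sA p.1 = r p.2].
pose S' := [set q : (A * G) * (B * (B * Z)) | E q.1 /\ C ((q.1.2, (actA q.1.1 q.1.2, q.2.1)), q.2.2.2) /\ q.2.2.1 = actB q.1.2 q.2.1].
have rc : rel_closed (E `*` setT) ((E `*` setT) `&` closure S').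
  by exists (closure S'); split => //; exact: closed_closure.
have [K1 [cK1 eq1]] := HP _ _ rc.
pose m := fun y : ((A * B) * (A * B)) * Z =>
  ((y.1.2.1, y.1.1.1), (y.1.2.2, (y.1.1.2, y.2))).
have cm : continuous m by rewrite /m; cont_tac.
exists (m @^-1` K1); split.
  exact: (proj1 (continuous_closedP m) cm K1 cK1).
have EE g a : sA a = s g -> E (actA a (inv g), g).
  move=> e; rewrite /E /= HsA; first by have [_ -> _ _] := Hinv g.
  by have [-> _ _ _] := Hinv g.
have imK p : ((E `*` setT) `&` closure S') p ->
    K1 ((actA p.1.1 p.1.2, p.1.1), p.2).
  move=> Cp; have : ((fun p : (A * G) * (B * (B * Z)) =>
     ((actA p.1.1 p.1.2, p.1.1), p.2)) @` ((E `*` setT) `&` closure S'))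
     ((actA p.1.1 p.1.2, p.1.1), p.2) by exists p.
  by rewrite eq1 => -[].
rewrite hC; apply/seteqP; split.
  move=> _ [[[g [a b]] z] [[[Wab Dg] _] Kp] <-].
  split.
    split => //; split => //=.
    rewrite /fibre_prod /= HsA; last by have [-> _ _ _] := Hinv g; rewrite Dg.
    rewrite HrB; last by rewrite Dg.
    by have [_ -> _ _] := Hinv g.
  have e : sA a = s g by rewrite Dg.
  have := imK ((actA a (inv g), g), (b, (actB g b, z))).
  rewrite /m /= alg1 //; apply; split; first by split => //; exact: EE.
  apply: subset_closure; split; first exact: EE.
  split => //=; rewrite alg1 // hC; split => //.
move=> [[[x c] [a b]] z] [[[Wxc Wab] _] Km].
have : ((fun p : (A * G) * (B * (B * Z)) =>
     ((actA p.1.1 p.1.2, p.1.1), p.2)) @` ((E `*` setT) `&` closure S'))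
     ((a, x), (b, (c, z))) by rewrite eq1.
move=> [[[a' h] [b' [c' z']]] [[Eah _] clS]] /= [e1 e2 e3 e4 e5]; subst a x b' c' z'.
have sh : s h = rB b by rewrite -(HsA _ _ Eah).
have KK : K ((h, (actA a' h, b)), z).
  apply: (closure_K (P := [set q : (A * G) * (B * (B * Z)) | E q.1])
    (f := fun q : (A * G) * (B * (B * Z)) =>
       ((q.1.2, (actA q.1.1 q.1.2, q.2.1)), q.2.2.2)) clS).
  - by move=> q [].
  - apply: cw_pair; last by apply: cw_cont; cont_tac.
    apply: cw_pair; first by apply: cw_cont; cont_tac.
    apply: cw_pair; last by apply: cw_cont; cont_tac.
    apply: (cw_comp (Q := E) (f := fst) (g := fun p : A * G => actA p.1 p.2)).
    + by apply: cw_cont; cont_tac.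
    + by move=> q.
    + exact: cA.
  - exact: cK.
  - by move=> y [_ [+ _]]; rewrite hC => -[].
have ec : c = actB h b.
  apply: (hausd (P := [set q : (A * G) * (B * (B * Z)) | E q.1 /\ s q.1.2 = rB q.2.1])
    (f1 := fun q : (A * G) * (B * (B * Z)) => q.2.2.1)
    (f2 := fun q : (A * G) * (B * (B * Z)) => actB q.1.2 q.2.1) HB clS).
  - move=> q [Eq [+ _]]; rewrite hC => -[[[Wq Dq] _] _]; split => //.
    by rewrite Dq.
  - by apply: cw_cont; cont_tac.
  - apply: (cw_comp (Q := [set p : G * B | s p.1 = rB p.2])
      (f := fun q : (A * G) * (B * (B * Z)) => (q.1.2, q.2.1))
      (g := fun p : G * B => actB p.1 p.2)).
    + by apply: cw_cont; cont_tac.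
    + by move=> q [].
    + exact: cB.
  - by move=> y [_ [_ ->]].
exists ((h, (actA a' h, b)), z).
  split => //; split => //; split => //=.
  by rewrite HsA.
by rewrite /diag_act /= alg2 // -ec.
Qed.
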